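(* Let $d\ge1$ be an integer and let $\chi^2(d)$ denote a chi-square random variable with $d$ degrees of freedom. For every $t>0$, with $Z_d(t)=t-d\log\!\big(1+\tfrac td\big)$, $$\mathbb P\big(\chi^2(d)\ge d+t\big)\le\frac{1}{\sqrt{2\pi Z_d(t)}}\exp\!\Big(-\frac{Z_d(t)}{2}\Big).$$ *)

(* Defs.v *)
From Stdlib Require Import Reals Lra Lia Arith.
Open Scope R_scope.

(* Gamma(d/2) for a positive integer d:
   d = 2k   : Gamma(k)       = (k-1)!
   d = 2k+1 : Gamma(k + 1/2) = (2k)! / (4^k k!) * sqrt(pi) *)
Definition Gamma_half (d : nat) : R :=
  if Nat.even d then INR (fact (Nat.div2 d - 1))
  else INR (fact (2 * Nat.div2 d)) / (4 ^ Nat.div2 d * INR (fact (Nat.div2 d)))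
       * sqrt PI.

Definition chi2_density (d : nat) (u : R) : R :=
  if Rle_dec u 0 then 0
  else Rpower u (INR d / 2 - 1) * exp (- u / 2)
       / (Rpower 2 (INR d / 2) * Gamma_half d).

(* [chi2_tail d x p] : p = P(chi^2(d) >= x) = \int_x^\infty f_d(u) du,
   the improper integral being the limit of Riemann integrals over [x,b]. *)
Definition chi2_tail (d : nat) (x p : R) : Prop :=
  (forall b, x <= b -> inhabited (Riemann_integrable (chi2_density d) x b)) /\
  (forall eps, 0 < eps -> exists B, forall b, B <= b ->
     forall pr : Riemann_integrable (chi2_density d) x b,
       Rabs (RiemannInt pr - p) < eps).

Definition Zd (d : nat) (t : R) : R := t - INR d * ln (1 + t / INR d).

(* Main.v *)
Require Import Defs.
From Coquelicot Require Import Coquelicot.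
From Stdlib Require Import Reals Lra Lia Psatz Arith ZArith Classical.
Open Scope R_scope.

Lemma mono_deriv (f df : R -> R) a b : a <= b ->
  (forall x, a <= x <= b -> is_derive f x (df x)) ->
  (forall x, a <= x <= b -> 0 <= df x) -> f a <= f b.
Proof.
intros hab hd hpos.
destruct (Req_dec a b) as [->|hne]; [lra|].
destruct (MVT_gen f a b df) as [c [hc eq]].
- intros x hx. rewrite Rmin_left in hx by lra. rewrite Rmax_right in hx by lra.
  apply hd; lra.
- intros x hx. rewrite Rmin_left in hx by lra. rewrite Rmax_right in hx by lra.
  apply continuity_pt_filterlim. apply (ex_derive_continuous (V:=R_NormedModule)).
  eexists; apply hd; lra.
- rewrite Rmin_left in hc by lra. rewrite Rmax_right in hc by lra.
  assert (0 <= df c) by (apply hpos; lra). nra.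
Qed.

Lemma lnA (y : R) : 0 <= y < 1 -> 2 * y <= ln (1 + y) - ln (1 - y).
Proof.
intros hy.
set (f := fun z => ln (1 + z) - ln (1 - z) - 2 * z).
assert (f 0 <= f y).
{ apply (mono_deriv f (fun z => / (1 + z) + / (1 - z) - 2)); [lra| |].
  - intros x hx. unfold f. auto_derive. lra. field. lra.
  - intros x hx. assert (0 < 1 - x) by lra. assert (0 < 1 + x) by lra.
    assert (/ (1 + x) + / (1 - x) - 2 = 2 * x * x / ((1+x)*(1-x))) as -> by (field; lra).
    apply Rdiv_le_0_compat; nra. }
unfold f in H. replace (1+0) with 1 in H by ring. replace (1-0) with 1 in H by ring. rewrite ln_1 in H. lra.
Qed.

Lemma lnB (y : R) : 0 <= y < 1 ->
  ln (1 + y) - ln (1 - y) <= 2 * y + 2 * y^3 / (3 * (1 - y^2)).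
Proof.
intros hy.
set (f := fun z => 2 * z + 2 * z^3 / (3 * (1 - z^2)) - (ln (1 + z) - ln (1 - z))).
assert (f 0 <= f y).
{ apply (mono_deriv f (fun z => 4 * z^4 / (3 * (1 - z^2)^2))); [lra| |].
  - intros x hx. assert (0 < 1 - x) by lra. assert (0 < 1 + x) by lra.
    assert (1 - x^2 <> 0) by nra.
    unfold f. auto_derive. repeat split; lra. field. lra.
  - intros x hx. assert (0 < 1 - x^2) by nra.
    apply Rdiv_le_0_compat; [nra|]. apply Rmult_lt_0_compat; [lra|]. nra. }
unfold f in H. replace (1+0) with 1 in H by ring. replace (1-0) with 1 in H by ring. rewrite ln_1 in H.
assert (2 * 0 + 2 * 0^3 / (3 * (1 - 0^2)) = 0) by (field). lra.
Qed.

Lemma ln_diff_y (x : R) : 0 < x ->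
  ln (x + 1) - ln x = ln (1 + / (2*x+1)) - ln (1 - / (2*x+1)).
Proof.
intros hx.
assert (1 + / (2*x+1) = (x+1) / (x + /2)) as -> by (field; lra).
assert (1 - / (2*x+1) = x / (x + /2)) as -> by (field; lra).
rewrite !ln_div; try lra. 
Qed.

Lemma Mlow (x : R) : 0 < x -> 1 <= (x + /2) * (ln (x + 1) - ln x).
Proof.
intros hx. rewrite ln_diff_y by lra.
assert (0 < / (2*x+1) < 1).
{ split. apply Rinv_0_lt_compat; lra. rewrite <- Rinv_1. apply Rinv_lt_contravar; lra. }
pose proof (lnA (/ (2*x+1)) ltac:(lra)).
assert (1 = (x + /2) * (2 * / (2*x+1))) by (field; lra).
nra.
Qed.

Lemma Mup (x : R) : 0 < x ->
  (x + /2) * (ln (x + 1) - ln x) <= 1 + / (12 * x) - / (12 * (x+1)).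
Proof.
intros hx. rewrite ln_diff_y by lra.
assert (0 < / (2*x+1) < 1).
{ split. apply Rinv_0_lt_compat; lra. rewrite <- Rinv_1. apply Rinv_lt_contravar; lra. }
pose proof (lnB (/ (2*x+1)) ltac:(lra)).
set (y := / (2*x+1)) in *.
assert (1 + / (12 * x) - / (12 * (x+1)) = (x + /2) * (2 * y + 2 * y^3 / (3 * (1 - y^2)))).
{ unfold y. field. repeat split; try lra. nra. } 
rewrite H1. apply Rmult_le_compat_l; lra.
Qed.

Lemma GH_even k : Gamma_half (2 * (k+1)) = INR (fact k).
Proof.
unfold Gamma_half. rewrite Nat.even_even, Nat.div2_double. f_equal. f_equal. lia.
Qed.

Lemma GH_odd k : Gamma_half (2 * k + 1) =
  INR (fact (2 * k)) / (4 ^ k * INR (fact k)) * sqrt PI.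
Proof.
unfold Gamma_half. rewrite Nat.even_odd, Nat.div2_odd'. reflexivity.
Qed.

Lemma sqrtPI_pos : 0 < sqrt PI.
Proof. apply sqrt_lt_R0, PI_RGT_0. Qed.

Lemma GH_pos d : (1 <= d)%nat -> 0 < Gamma_half d.
Proof.
intros hd. destruct (Nat.Even_or_Odd d) as [[k ->]|[k ->]].
- replace k with (k - 1 + 1)%nat by lia. rewrite GH_even. apply INR_fact_lt_0.
- rewrite GH_odd. apply Rmult_lt_0_compat; [|apply sqrtPI_pos].
  apply Rdiv_lt_0_compat; [apply INR_fact_lt_0|].
  apply Rmult_lt_0_compat; [apply pow_lt; lra|apply INR_fact_lt_0].
Qed.

Lemma GH_rec d : (1 <= d)%nat -> Gamma_half (d + 2) = INR d / 2 * Gamma_half d.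
Proof.
intros hd. destruct (Nat.Even_or_Odd d) as [[k ->]|[k ->]].
- replace k with (k - 1 + 1)%nat by lia. set (j := (k-1)%nat).
  replace (2 * (j + 1) + 2)%nat with (2 * ((j + 1) + 1))%nat by lia.
  rewrite !GH_even. replace (j+1)%nat with (S j) by lia. rewrite fact_simpl, mult_INR.
  rewrite mult_INR. rewrite S_INR. replace (INR 2) with 2 by (simpl; lra). field.
- replace (2 * k + 1 + 2)%nat with (2 * (k+1) + 1)%nat by lia.
  rewrite !GH_odd. replace (2 * (k+1))%nat with (S (S (2 * k))) by lia.
  replace (k+1)%nat with (S k) by lia.
  rewrite !fact_simpl, !mult_INR. rewrite !S_INR, mult_INR, plus_INR. replace (INR 2) with 2 by (simpl; lra).
  assert (0 < INR (fact (2*k))) by apply INR_fact_lt_0.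
  assert (0 < INR (fact k)) by apply INR_fact_lt_0.
  assert (0 < 4 ^ k) by (apply pow_lt; lra).
  pose proof (pos_INR k).
  rewrite mult_INR. replace (INR 2) with 2 by (simpl; lra). replace (INR 1) with 1 by reflexivity. rewrite <- tech_pow_Rmult. field. repeat split; lra.
Qed.

Definition Lf (d : nat) : R :=
  ln (Gamma_half d) + INR d / 2 - (INR d / 2 - / 2) * ln (INR d / 2) - ln (2 * PI) / 2.

Lemma Lf_step d : (1 <= d)%nat ->
  Lf (d + 2) <= Lf d /\ Lf d - / (6 * INR d) <= Lf (d + 2) - / (6 * INR (d + 2)).
Proof.
intros hd.
assert (hx : 0 < INR d / 2) by (apply lt_0_INR in hd; lra).
set (x := INR d / 2) in *.
assert (hx2 : INR (d + 2) / 2 = x + 1) by (unfold x; rewrite plus_INR; simpl; lra).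
pose proof (GH_pos d hd) as hg.
assert (e : Lf d - Lf (d + 2) = (x + /2) * (ln (x + 1) - ln x) - 1).
{ unfold Lf. rewrite GH_rec by lia. fold x. rewrite hx2. rewrite (ln_mult x (Gamma_half d) hx hg). field. }
pose proof (Mlow x hx). pose proof (Mup x hx).
assert (/ (6 * INR d) = / (12 * x)) by (unfold x in *; field; lra).
assert (/ (6 * INR (d+2)) = / (12 * (x+1))).
{ assert (0 < INR (d+2)) by (rewrite plus_INR; pose proof (pos_INR d); simpl; lra). rewrite <- hx2. field. lra. }
lra.
Qed.

Ltac pos := repeat (first [lra | apply Rmult_lt_0_compat | apply Rinv_0_lt_compat | apply pow_lt | apply sqrt_lt_R0 | apply INR_fact_lt_0]).

Lemma ln_le' x y : 0 < x -> x <= y -> ln x <= ln y.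
Proof. intros hx hxy. destruct (Req_dec x y) as [->|]; [lra|]. left; apply ln_increasing; lra. Qed.

Lemma ln_1plus_le y : 0 <= y -> ln (1 + y) <= y.
Proof.
intros hy. rewrite <- (ln_exp y) at 2. apply ln_le'; [lra|].
destruct (Req_dec y 0) as [->|]. rewrite exp_0; lra. left; apply exp_ineq1; lra.
Qed.

Lemma ln_sqrt' x : 0 < x -> ln (sqrt x) = ln x / 2.
Proof.
intros hx. assert (h : ln (sqrt x * sqrt x) = ln x) by (rewrite sqrt_sqrt; lra).
rewrite ln_mult in h by (apply sqrt_lt_R0; lra). lra.
Qed.

Lemma ln2x y : 0 < y -> ln (2 * y) = ln 2 + ln y.
Proof. intros; apply ln_mult; lra. Qed.

Lemma INRpos n : (1 <= n)%nat -> 0 < INR n.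
Proof. intros; apply lt_0_INR; lia. Qed.

Lemma Lf_dup n : (1 <= n)%nat -> Lf (4 * n) <= Lf (2 * n) + Lf (2 * n + 1).
Proof.
intros hn. destruct n as [|k]; [lia|].
assert (hN : 0 < INR (S k)) by (apply INRpos; lia).
set (N := INR (S k)) in *.
assert (e1 : Gamma_half (2 * S k) = INR (fact k)) by (replace (S k) with (k+1)%nat by lia; apply GH_even).
assert (e2 : Gamma_half (4 * S k) = INR (fact (2*k+1))).
{ replace (4 * S k)%nat with (2 * ((2 * k + 1) + 1))%nat by lia. apply GH_even. }
assert (f1 : INR (fact (2 * S k)) = 2 * N * INR (fact (2*k+1))).
{ replace (2 * S k)%nat with (S (2*k+1)) by lia. rewrite fact_simpl, mult_INR.
  unfold N. rewrite !S_INR, plus_INR, mult_INR. simpl. ring. }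
assert (f2 : INR (fact (S k)) = N * INR (fact k)) by (rewrite fact_simpl, mult_INR; reflexivity).
pose proof (INR_fact_lt_0 k). pose proof (INR_fact_lt_0 (2*k+1)).
pose proof PI_RGT_0. assert (0 < 4 ^ S k) by (apply pow_lt; lra).
assert (hG : ln (INR (fact (2 * S k)) / (4 ^ S k * INR (fact (S k))) * sqrt PI)
   = ln 2 + ln (INR (fact (2*k+1))) - N * (2 * ln 2) - ln (INR (fact k)) + ln PI / 2).
{ rewrite f1, f2.
  replace (2 * N * INR (fact (2 * k + 1)) / (4 ^ S k * (N * INR (fact k))) * sqrt PI)
   with (2 * INR (fact (2 * k + 1)) * sqrt PI * / (4 ^ S k * INR (fact k))) by (field; repeat split; lra).
  rewrite ln_mult by pos. rewrite ln_mult by pos. rewrite ln_mult by pos.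
  rewrite ln_Rinv by pos. rewrite ln_mult by pos. rewrite ln_pow by pos. rewrite ln_sqrt' by pos.
  replace 4 with (2*2) by ring. rewrite ln_mult by lra. fold N. ring. }
unfold Lf. rewrite e1, e2, GH_odd, hG.
assert (i1 : INR (2 * S k) / 2 = N) by (unfold N; rewrite mult_INR; simpl; field).
assert (i2 : INR (2 * S k + 1) / 2 = N + /2) by (unfold N; rewrite plus_INR, mult_INR; simpl; field).
assert (i3 : INR (4 * S k) / 2 = 2 * N) by (unfold N; rewrite mult_INR; simpl; field).
rewrite i1, i2, i3, ln2x by lra. rewrite (ln_mult 2 PI) by lra.
assert (ln (N + /2) = ln N + ln (1 + / (2 * N))).
{ rewrite <- ln_mult by (try lra; assert (0 < / (2*N)) by (apply Rinv_0_lt_compat; lra); lra).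
  f_equal. field. lra. }
pose proof (ln_1plus_le (/ (2 * N)) ltac:(left; apply Rinv_0_lt_compat; lra)) as hl.
assert (hh : N * / (2 * N) = /2) by (field; lra).
assert (N * ln (1 + / (2 * N)) <= /2) by (rewrite <- hh; apply Rmult_le_compat_l; lra).
nra.
Qed.

Lemma Lf_wallis k :
  PI * INR (fact (2*k+1)) ^ 2 <= INR (S k) * 4 ^ (2*k+1) * INR (fact k) ^ 4 ->
  Lf (4 * S k) <= 2 * Lf (2 * S k).
Proof.
intros hw.
assert (hN : 0 < INR (S k)) by (apply INRpos; lia).
set (N := INR (S k)) in *.
assert (e1 : Gamma_half (2 * S k) = INR (fact k)) by (replace (S k) with (k+1)%nat by lia; apply GH_even).
assert (e2 : Gamma_half (4 * S k) = INR (fact (2*k+1))).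
{ replace (4 * S k)%nat with (2 * ((2 * k + 1) + 1))%nat by lia. apply GH_even. }
pose proof (INR_fact_lt_0 k). pose proof (INR_fact_lt_0 (2*k+1)).
pose proof PI_RGT_0.
apply ln_le' in hw; [|pos].
rewrite ln_mult in hw by pos. rewrite ln_pow in hw by pos.
rewrite ln_mult in hw by pos. rewrite ln_mult in hw by pos.
rewrite ln_pow in hw by pos. rewrite ln_pow in hw by pos.
replace 4 with (2*2) in hw by ring. rewrite (ln_mult 2 2) in hw by lra.
assert (i0 : INR (2*k+1) = 2 * N - 1).
{ unfold N. rewrite plus_INR, mult_INR, S_INR. simpl (INR 2). simpl (INR 1). rewrite S_INR. ring. }
rewrite i0 in hw.
unfold Lf. rewrite e1, e2.
assert (i1 : INR (2 * S k) / 2 = N) by (unfold N; rewrite mult_INR; simpl; field).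
assert (i3 : INR (4 * S k) / 2 = 2 * N) by (unfold N; rewrite mult_INR; simpl; field).
rewrite i1, i3, ln2x by lra. rewrite (ln_mult 2 PI) by lra.
replace (INR 2) with 2 in hw by (simpl; lra). replace (INR 4) with 4 in hw by (simpl; lra).
lra.
Qed.

Definition Iw (k : nat) : R := RInt (fun x => sin x ^ k) 0 (PI / 2).

Lemma ex_Iw k : ex_RInt (fun x => sin x ^ k) 0 (PI / 2).
Proof.
apply (ex_RInt_continuous (V := R_CompleteNormedModule)). intros z _. 
apply (continuous_comp sin (fun y => y ^ k)).
- apply continuity_pt_filterlim. apply continuity_sin.
- apply continuity_pt_filterlim. apply derivable_continuous_pt. apply derivable_pt_pow.
Qed.

Lemma Iw_rec k : INR (k + 2) * Iw (k + 2) = INR (k + 1) * Iw k.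
Proof.
pose proof PI_RGT_0.
pose (F := fun x => - cos x * sin x ^ (k+1)).
assert (h : is_RInt (fun x => INR (k+2) * sin x ^ (k+2) - INR (k+1) * sin x ^ k) 0 (PI/2)
   (minus (F (PI/2)) (F 0))).
{ apply (is_RInt_derive (V := R_CompleteNormedModule) F).
  - intros x _. unfold F. auto_derive; [exact I|].
    replace (k+2)%nat with (S (S k)) by lia. replace (k+1)%nat with (S k) by lia.
    rewrite !S_INR. simpl pred. simpl pow. pose proof (sin2_cos2 x). unfold Rsqr in H0.
    assert (cos x * cos x = 1 - sin x * sin x) by lra. transitivity (sin x * sin x * sin x ^ k - (INR k + 1) * (cos x * cos x) * sin x ^ k); [ring|]. rewrite H1. ring.
  - intros x _. apply (continuous_minus (V := R_NormedModule)); apply (continuous_scal_r (K := R_AbsRing) (V:=R_NormedModule));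
    apply (continuous_comp sin (fun y => y ^ _));
    apply continuity_pt_filterlim; [apply continuity_sin| apply derivable_continuous_pt, derivable_pt_pow|apply continuity_sin| apply derivable_continuous_pt, derivable_pt_pow]. }
assert (hz : minus (F (PI/2)) (F 0) = 0).
{ unfold F, minus, plus, opp; simpl. rewrite cos_PI2, sin_0, cos_0.
  replace (k+1)%nat with (S k) by lia. simpl. ring. }
rewrite hz in h.
assert (h2 : is_RInt (fun x => INR (k+2) * sin x ^ (k+2) - INR (k+1) * sin x ^ k) 0 (PI/2)
   (INR (k+2) * Iw (k+2) - INR (k+1) * Iw k)).
{ apply (is_RInt_minus (V := R_NormedModule)); apply (is_RInt_scal (V := R_NormedModule));
  apply (RInt_correct (V := R_CompleteNormedModule)); apply ex_Iw. }
pose proof (is_RInt_unique _ _ _ _ h) as hu.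
pose proof (is_RInt_unique _ _ _ _ h2) as hu2.
lra.
Qed.

Lemma Iw0 : Iw 0 = PI / 2.
Proof.
unfold Iw. simpl pow. rewrite RInt_const. unfold scal; simpl. unfold mult; simpl. ring.
Qed.

Lemma Iw1 : Iw 1 = 1.
Proof.
assert (h : is_RInt (fun x => sin x ^ 1) 0 (PI/2) (minus ((fun x => - cos x) (PI/2)) ((fun x => - cos x) 0))).
{ apply (is_RInt_derive (V := R_CompleteNormedModule) (fun x => - cos x)).
  - intros x _. auto_derive; [exact I|]. ring.
  - intros x _. apply (continuous_comp sin (fun y => y ^ 1)); apply continuity_pt_filterlim; [apply continuity_sin|apply derivable_continuous_pt, derivable_pt_pow]. }
unfold Iw. rewrite (is_RInt_unique _ _ _ _ h). unfold minus, plus, opp; simpl.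
rewrite cos_PI2, cos_0. ring.
Qed.

Lemma Iw_mono k : Iw (S k) <= Iw k.
Proof.
pose proof PI_RGT_0.
apply RInt_le; try apply ex_Iw; [lra|].
intros x hx. simpl pow.
assert (0 <= sin x) by (apply sin_ge_0; lra). pose proof (SIN_bound x).
assert (0 <= sin x ^ k) by (apply pow_le; lra). nra.
Qed.

Lemma Iw_even n : Iw (2 * n) = PI / 2 * INR (fact (2 * n)) / (4 ^ n * INR (fact n) ^ 2).
Proof.
induction n as [|n IH].
- simpl. rewrite Iw0. field.
- pose proof (Iw_rec (2 * n)) as hr.
  replace (2 * n + 2)%nat with (2 * S n)%nat in hr by lia.
  assert (hpos : 0 < INR (2 * S n)) by (apply lt_0_INR; lia).
  assert (Iw (2 * S n) = INR (2 * n + 1) / INR (2 * S n) * Iw (2 * n)) by (apply (Rmult_eq_reg_l (INR (2 * S n))); [rewrite hr; field|]; lra).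
  rewrite H, IH.
  replace (2 * S n)%nat with (S (S (2 * n))) by lia.
  rewrite !fact_simpl, !mult_INR. rewrite ?plus_INR, ?mult_INR, ?S_INR, ?plus_INR, ?mult_INR, ?S_INR. simpl (INR 0).
  simpl pow.
  pose proof (INR_fact_lt_0 n). pose proof (INR_fact_lt_0 (2*n)). pose proof (pos_INR n).
  assert (0 < 4 ^ n) by (apply pow_lt; lra).
  field. repeat split; lra.
Qed.

Lemma Iw_odd n : Iw (2 * n + 1) = 4 ^ n * INR (fact n) ^ 2 / INR (fact (2 * n + 1)).
Proof.
induction n as [|n IH].
- simpl. rewrite Iw1. field.
- pose proof (Iw_rec (2 * n + 1)) as hr.
  replace (2 * n + 1 + 2)%nat with (2 * S n + 1)%nat in hr by lia.
  assert (hpos : 0 < INR (2 * S n + 1)) by (apply lt_0_INR; lia).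
  assert (Iw (2 * S n + 1) = INR (2 * n + 1 + 1) / INR (2 * S n + 1) * Iw (2 * n + 1)) by (apply (Rmult_eq_reg_l (INR (2 * S n + 1))); [rewrite hr; field|]; lra).
  rewrite H, IH.
  replace (2 * S n + 1)%nat with (S (S (2 * n + 1))) by lia.
  rewrite !fact_simpl, !mult_INR. rewrite ?plus_INR, ?mult_INR, ?S_INR, ?plus_INR, ?mult_INR, ?S_INR. simpl (INR 0).
  simpl pow.
  pose proof (INR_fact_lt_0 n). pose proof (INR_fact_lt_0 (2*n+1)). pose proof (pos_INR n).
  field. repeat split; lra.
Qed.

Lemma wallis k : PI * INR (fact (2*k+1)) ^ 2 <= INR (S k) * 4 ^ (2*k+1) * INR (fact k) ^ 4.
Proof.
pose proof (Iw_mono (2 * k + 1)) as hm.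
replace (S (2 * k + 1)) with (2 * S k)%nat in hm by lia.
rewrite Iw_even, Iw_odd in hm.
replace (2 * S k)%nat with (S (2 * k + 1)) in hm by lia.
rewrite fact_simpl, mult_INR in hm. rewrite fact_simpl, mult_INR in hm.
pose proof (INR_fact_lt_0 k). pose proof (INR_fact_lt_0 (2*k+1)).
assert (0 < 4 ^ k) by (apply pow_lt; lra). pose proof PI_RGT_0.
assert (hS : INR (S (2 * k + 1)) = 2 * INR (S k)).
{ rewrite ?S_INR, ?plus_INR, ?mult_INR, ?S_INR. simpl (INR 0). ring. }
rewrite hS in hm. assert (0 < INR (S k)) by (apply lt_0_INR; lia).
set (a := INR (fact (2*k+1))) in *. set (b := INR (fact k)) in *. set (n := INR (S k)) in *.
replace (4 ^ (2*k+1)) with (4 * (4^k)^2) by (rewrite pow_add, (Nat.mul_comm 2 k), pow_mult; simpl; ring).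
replace (4 ^ S k) with (4 * 4^k) in hm by (simpl; ring).
assert (hq : PI / 2 * (2 * n * a) / (4 * 4 ^ k * (n * b) ^ 2) = PI * a / (4 * 4^k * n * b^2)) by (field; repeat split; lra).
rewrite hq in hm.
apply (Rmult_le_compat_r (4 * 4^k * n * b^2 * a)) in hm; [|apply Rmult_le_pos; [|lra]; repeat apply Rmult_le_pos; try lra; nra].
replace (PI * a / (4 * 4 ^ k * n * b ^ 2) * (4 * 4 ^ k * n * b ^ 2 * a)) with (PI * a^2) in hm by (field; repeat split; lra).
replace (4 ^ k * b ^ 2 / a * (4 * 4 ^ k * n * b ^ 2 * a)) with (n * (4 * (4 ^ k) ^ 2) * b ^ 4) in hm by (field; lra).
exact hm.
Qed.


Lemma nat_unbounded (r : R) : exists n : nat, r < INR n.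
Proof.
destruct (archimed r) as [h1 h2].
destruct (Z_lt_le_dec (up r) 0) as [hz|hz].
- exists 0%nat. simpl. apply IZR_lt in hz. lra.
- exists (Z.to_nat (up r)). rewrite INR_IZR_INZ, Z2Nat.id by lia. lra.
Qed.

Lemma Lf_w m : (1 <= m)%nat -> Lf (4 * m) <= 2 * Lf (2 * m).
Proof. intros hm. destruct m as [|k]; [lia|]. apply Lf_wallis, wallis. Qed.

Lemma Lf_mono d j : (1 <= d)%nat -> Lf (d + 2 * j) <= Lf d.
Proof.
intros hd. induction j as [|j IH].
- replace (d + 2*0)%nat with d by lia. lra.
- replace (d + 2 * S j)%nat with ((d + 2*j) + 2)%nat by lia.
  destruct (Lf_step (d + 2*j) ltac:(lia)). lra.
Qed.

Lemma Lf_low_aux j : Lf 2 - / 12 <= Lf (2 * (j+1)) - / (6 * INR (2 * (j+1))).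
Proof.
induction j as [|j IH].
- simpl. replace (1+1) with 2 by ring. lra.
- replace (2 * (S j + 1))%nat with (2 * (j+1) + 2)%nat by lia.
  destruct (Lf_step (2 * (j+1)) ltac:(lia)). lra.
Qed.

Lemma Lf_low m : (1 <= m)%nat -> Lf 2 - / 12 <= Lf (2 * m).
Proof.
intros hm. replace m with ((m-1)+1)%nat by lia.
pose proof (Lf_low_aux (m-1)).
assert (0 < / (6 * INR (2 * (m - 1 + 1)))).
{ apply Rinv_0_lt_compat. apply Rmult_lt_0_compat; [lra|]. apply INRpos; lia. }
lra.
Qed.

Lemma Lf_even n : (1 <= n)%nat -> 0 <= Lf (2 * n).
Proof.
intros hn. destruct (Rle_lt_dec 0 (Lf (2*n))) as [|hneg]; [assumption|exfalso].
assert (it : forall j, Lf (2 * (2^j * n)) <= 2 ^ j * Lf (2 * n)).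
{ induction j as [|j IH].
  - rewrite Nat.pow_0_r, Nat.mul_1_l, pow_O. lra.
  - replace (2 * (2 ^ S j * n))%nat with (4 * (2^j * n))%nat by (simpl; lia).
    assert (1 <= 2^j * n)%nat by (pose proof (Nat.pow_nonzero 2 j); nia).
    pose proof (Lf_w (2^j * n) H). simpl pow. nra. }
assert (pw : forall j, INR (S j) <= 2 ^ j).
{ induction j as [|j IH]. simpl; lra. rewrite S_INR. simpl pow. 
  assert (1 <= 2 ^ j) by (apply pow_R1_Rle; lra). lra. }
destruct (nat_unbounded ((Lf 2 - /12) / Lf (2*n))) as [j hj].
pose proof (it j). pose proof (pw j).
assert (1 <= 2^j * n)%nat by (pose proof (Nat.pow_nonzero 2 j); nia).
pose proof (Lf_low _ H1).
assert (2^j * Lf (2*n) <= INR (S j) * Lf (2*n)) by nra.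
assert (Lf 2 - /12 <= INR (S j) * Lf (2*n)) by lra.
apply (Rmult_lt_compat_r (- Lf (2*n))) in hj; [|lra].
rewrite S_INR in H4.
assert ((Lf 2 - / 12) / Lf (2 * n) * - Lf (2 * n) = - (Lf 2 - /12)) by (field; lra).
nra.
Qed.

Lemma Lf_odd m : 0 <= Lf (2 * m + 1).
Proof.
destruct (Rle_lt_dec 0 (Lf (2*m+1))) as [|hneg]; [assumption|exfalso].
set (eta := - Lf (2*m+1)).
assert (step : forall N, (m + 1 <= N)%nat -> Lf (4 * N) <= Lf (2 * N) - eta).
{ intros N hN. pose proof (Lf_dup N ltac:(lia)).
  pose proof (Lf_mono (2*m+1) (N - m) ltac:(lia)).
  replace (2 * m + 1 + 2 * (N - m))%nat with (2 * N + 1)%nat in H0 by lia.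
  unfold eta; lra. }
assert (it : forall j, Lf (2 * (2^j * (m+1))) <= Lf (2 * (m+1)) - INR j * eta).
{ induction j as [|j IH].
  - rewrite Nat.pow_0_r, Nat.mul_1_l. simpl INR. lra.
  - replace (2 * (2 ^ S j * (m+1)))%nat with (4 * (2^j * (m+1)))%nat by (simpl; lia).
    assert (m + 1 <= 2^j * (m+1))%nat by (pose proof (Nat.pow_nonzero 2 j); nia).
    pose proof (step _ H). rewrite S_INR. lra. }
destruct (nat_unbounded ((Lf (2 * (m+1)) - (Lf 2 - /12)) / eta)) as [j hj].
pose proof (it j).
assert (1 <= 2^j * (m+1))%nat by (pose proof (Nat.pow_nonzero 2 j); nia).
pose proof (Lf_low _ H0).
assert (0 < eta) by (unfold eta; lra).
apply (Rmult_lt_compat_r eta) in hj; [|lra].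
assert ((Lf (2 * (m+1)) - (Lf 2 - /12)) / eta * eta = Lf (2 * (m+1)) - (Lf 2 - /12)) by (field; lra).
lra.
Qed.

Lemma Lf_nonneg d : (1 <= d)%nat -> 0 <= Lf d.
Proof.
intros hd. destruct (Nat.Even_or_Odd d) as [[k ->]|[k ->]].
- apply Lf_even; lia.
- apply Lf_odd.
Qed.


Lemma lnC s : 0 <= s -> s - s^2/2 <= ln (1 + s).
Proof.
intros hs.
set (f := fun z => ln (1 + z) - z + z^2/2).
assert (f 0 <= f s).
{ apply (mono_deriv f (fun z => z^2 / (1 + z))); [lra| |].
  - intros x hx. unfold f. auto_derive. lra. field. lra.
  - intros x hx. apply Rdiv_le_0_compat; nra. }
unfold f in H. replace (1+0) with 1 in H by ring. rewrite ln_1 in H. lra.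
Qed.

Lemma ln_lt_id s : 0 < s -> ln (1 + s) < s.
Proof.
intros hs. rewrite <- (ln_exp s) at 2. apply ln_increasing; [lra|]. apply exp_ineq1; lra.
Qed.

Lemma Z_facts d t : (1 <= d)%nat -> 0 < t ->
  0 < Zd d t /\ 2 * INR d * Zd d t <= t ^ 2.
Proof.
intros hd ht. assert (hD : 0 < INR d) by (apply lt_0_INR; lia).
unfold Zd. split.
- pose proof (ln_lt_id (t / INR d) ltac:(apply Rdiv_lt_0_compat; lra)).
  assert (INR d * ln (1 + t / INR d) < INR d * (t / INR d)) by (apply Rmult_lt_compat_l; lra).
  replace (INR d * (t / INR d)) with t in H0 by (field; lra). lra.
- pose proof (lnC (t / INR d) ltac:(left; apply Rdiv_lt_0_compat; lra)).
  assert (INR d * (t / INR d - (t / INR d)^2/2) <= INR d * ln (1 + t / INR d)) by (apply Rmult_le_compat_l; lra).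
  replace (INR d * (t / INR d - (t / INR d)^2/2)) with (t - t^2 / (2 * INR d)) in H0 by (field; lra).
  assert (2 * INR d * (t - INR d * ln (1 + t / INR d)) <= 2 * INR d * (t^2 / (2 * INR d))) by (apply Rmult_le_compat_l; lra).
  replace (2 * INR d * (t^2 / (2 * INR d))) with (t^2) in H1 by (field; lra). lra.
Qed.

Lemma stirling d : (1 <= d)%nat ->
  ln 2 / 2 + ln PI / 2 - INR d / 2 + (INR d - 1) / 2 * (ln (INR d) - ln 2) <= ln (Gamma_half d).
Proof.
intros hd. pose proof (Lf_nonneg d hd) as h. unfold Lf in h.
assert (hD : 0 < INR d) by (apply lt_0_INR; lia).
rewrite ln_div in h by lra. rewrite ln_mult in h by (pose proof PI_RGT_0; lra).
lra.
Qed.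

Lemma ln_le_inv a b : 0 < a -> 0 < b -> ln a <= ln b -> a <= b.
Proof.
intros ha hb h. destruct (Rle_lt_dec a b) as [|hlt]; [assumption|].
apply ln_increasing in hlt; [lra|assumption].
Qed.

Definition Kc (d : nat) (t : R) : R :=
  / sqrt (8 * PI * Zd d t) * exp (INR d / 2 - INR d / 2 * ln (INR d)).

Definition Hd (d : nat) (t u : R) : R :=
  Kc d t * exp (- u / 2 + INR d / 2 * ln u) * (u - INR d) / u.

Lemma pointwise d t u : (1 <= d)%nat -> 0 < t -> INR d + t <= u ->
  chi2_density d u <= Hd d t u.
Proof.
intros hd ht hu.
assert (hD : 0 < INR d) by (apply lt_0_INR; lia).
destruct (Z_facts d t hd ht) as [hZ hZt].
pose proof (GH_pos d hd) as hG. pose proof PI_RGT_0 as hPI.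
assert (hu0 : 0 < u) by lra.
unfold chi2_density. destruct (Rle_dec u 0) as [|_]; [lra|].
unfold Hd, Kc. set (D := INR d) in *. set (Z := Zd d t) in *. set (G := Gamma_half d) in *.
assert (hR : Rpower u (D / 2 - 1) = exp (D / 2 * ln u) / u).
{ unfold Rpower. replace ((D/2 - 1) * ln u) with (D / 2 * ln u + - ln u) by ring.
  rewrite exp_plus, exp_Ropp, exp_ln by lra. field. lra. }
rewrite hR.
set (E := exp (- u / 2 + D / 2 * ln u)).
assert (hE : exp (D / 2 * ln u) * exp (- u / 2) = E) by (unfold E; rewrite <- exp_plus; f_equal; ring).
assert (hE0 : 0 < E) by apply exp_pos.
set (P2 := Rpower 2 (D / 2)). assert (hP2 : 0 < P2) by (unfold P2, Rpower; apply exp_pos).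
set (S8 := sqrt (8 * PI * Z)). assert (hS8 : 0 < S8) by (apply sqrt_lt_R0; nra).
set (c := exp (D / 2 - D / 2 * ln D)). assert (hc : 0 < c) by apply exp_pos.
assert (key : / (P2 * G) <= / S8 * c * (u - D)).
{ apply ln_le_inv. apply Rinv_0_lt_compat; nra.
  apply Rmult_lt_0_compat; [apply Rmult_lt_0_compat; [apply Rinv_0_lt_compat|]|]; lra.
  rewrite ln_Rinv by nra. rewrite ln_mult by lra.
  rewrite ln_mult by (try apply Rmult_lt_0_compat; try apply Rinv_0_lt_compat; lra).
  rewrite ln_mult by (try apply Rinv_0_lt_compat; lra).
  rewrite ln_Rinv by lra.
  unfold P2, Rpower, c, S8. rewrite !ln_exp. rewrite ln_sqrt' by nra.
  rewrite ln_mult by nra. rewrite ln_mult by lra.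
  replace 8 with (2 * (2 * 2)) by ring. rewrite ln_mult by lra. rewrite ln_mult by lra.
  pose proof (stirling d hd) as hs. fold D G in hs.
  assert (hlt : ln t <= ln (u - D)) by (apply ln_le'; lra).
  assert (h2 : ln (2 * D * Z) <= ln (t ^ 2)) by (apply ln_le'; [nra|lra]).
  rewrite ln_pow in h2 by lra. rewrite ln_mult in h2 by nra. rewrite ln_mult in h2 by lra.
  simpl INR in h2. nra. }
apply (Rmult_le_compat_l (E / u)) in key; [|apply Rdiv_le_0_compat; lra].
rewrite <- hE in key |- *.
replace (exp (D / 2 * ln u) / u * exp (- u / 2) / (P2 * G)) with (exp (D / 2 * ln u) * exp (- u / 2) / u * / (P2 * G)) by (field; repeat split; lra).
replace (/ S8 * c * exp (D / 2 * ln u) * exp (- u / 2) * (u - D) / u) with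
  (exp (D / 2 * ln u) * exp (- u / 2) / u * (/ S8 * c * (u - D))) by (field; lra).
replace (/ S8 * c * (exp (D / 2 * ln u) * exp (- u / 2)) * (u - D) / u) with (exp (D / 2 * ln u) * exp (- u / 2) / u * (/ S8 * c * (u - D))) by (field; lra). exact key.
Qed.

Lemma chi2_cont d u : (1 <= d)%nat -> 0 < u -> continuous (chi2_density d) u.
Proof.
intros hd hu.
pose proof (GH_pos d hd) as hG.
apply (continuous_ext_loc _ (fun y => Rpower y (INR d / 2 - 1) * exp (- y / 2)
     / (Rpower 2 (INR d / 2) * Gamma_half d))).
- apply (filter_imp (fun y => 0 < y)).
  + intros y hy. unfold chi2_density. destruct (Rle_dec y 0); [lra|reflexivity].
  + apply (open_gt 0). exact hu.
- apply (ex_derive_continuous (V := R_NormedModule)). unfold Rpower. auto_derive.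
  exact hu.
Qed.

Lemma chi2_ge0 d u : (1 <= d)%nat -> 0 <= chi2_density d u.
Proof.
intros hd. pose proof (GH_pos d hd). unfold chi2_density. destruct (Rle_dec u 0); [lra|].
unfold Rpower. pose proof (exp_pos ((INR d / 2 - 1) * ln u)). pose proof (exp_pos (- u / 2)).
pose proof (exp_pos (INR d / 2 * ln 2)).
apply Rdiv_le_0_compat; nra.
Qed.

Lemma chi2_ex d a b : (1 <= d)%nat -> 0 < a -> a <= b -> ex_RInt (chi2_density d) a b.
Proof.
intros hd ha hab. apply (ex_RInt_continuous (V := R_CompleteNormedModule)).
intros z hz. rewrite Rmin_left in hz by lra. apply chi2_cont; [assumption|lra].
Qed.

Lemma tail_bound d t b : (1 <= d)%nat -> 0 < t -> INR d + t <= b ->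
  RInt (chi2_density d) (INR d + t) b <= / sqrt (2 * PI * Zd d t) * exp (- Zd d t / 2).
Proof.
intros hd ht hb.
assert (hD : 0 < INR d) by (apply lt_0_INR; lia).
destruct (Z_facts d t hd ht) as [hZ hZt]. pose proof PI_RGT_0 as hPI.
set (Hf := fun u => - (2 * Kc d t) * exp (- u / 2 + INR d / 2 * ln u)).
assert (hI : is_RInt (Hd d t) (INR d + t) b (minus (Hf b) (Hf (INR d + t)))).
{ apply (is_RInt_derive (V := R_CompleteNormedModule) Hf).
  - intros x hx. rewrite Rmin_left in hx by lra. rewrite Rmax_right in hx by lra.
    unfold Hf, Hd. auto_derive. lra. unfold Rdiv. field. lra.
  - intros x hx. rewrite Rmin_left in hx by lra. rewrite Rmax_right in hx by lra.
    apply (ex_derive_continuous (V := R_NormedModule)). unfold Hd. auto_derive. lra. }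
assert (hle : RInt (chi2_density d) (INR d + t) b <= RInt (Hd d t) (INR d + t) b).
{ apply RInt_le; [lra| apply chi2_ex; [exact hd|lra|lra] | eexists; exact hI |].
  intros x hx. apply pointwise; [exact hd|exact ht|lra]. }
rewrite (is_RInt_unique _ _ _ _ hI) in hle.
assert (hK : 0 < Kc d t).
{ unfold Kc. apply Rmult_lt_0_compat; [apply Rinv_0_lt_compat, sqrt_lt_R0; nra|apply exp_pos]. }
assert (hHb : Hf b <= 0) by (unfold Hf; pose proof (exp_pos (- b / 2 + INR d / 2 * ln b)); nra).
assert (heq : - Hf (INR d + t) = / sqrt (2 * PI * Zd d t) * exp (- Zd d t / 2)).
{ unfold Hf, Kc.
  assert (sqrt (8 * PI * Zd d t) = 2 * sqrt (2 * PI * Zd d t)).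
  { replace (8 * PI * Zd d t) with ((2*2) * (2 * PI * Zd d t)) by ring.
    rewrite sqrt_mult by nra. rewrite sqrt_square by lra. reflexivity. }
  rewrite H. 
  assert (exp (INR d / 2 - INR d / 2 * ln (INR d)) * exp (- (INR d + t) / 2 + INR d / 2 * ln (INR d + t)) = exp (- Zd d t / 2)).
  { rewrite <- exp_plus. f_equal. unfold Zd.
    replace (1 + t / INR d) with ((INR d + t) / INR d) by (field; lra).
    rewrite ln_div by lra. field. }
  assert (0 < sqrt (2 * PI * Zd d t)) by (apply sqrt_lt_R0; nra).
  rewrite <- H0. field. lra. }
unfold minus, plus, opp in hle; simpl in hle. lra.
Qed.


Theorem lemma2 (d : nat) (t : R) (hd : (1 <= d)%nat) (ht : 0 < t) :
  exists p, chi2_tail d (INR d + t) p /\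
    p <= / sqrt (2 * PI * Zd d t) * exp (- Zd d t / 2).
Proof.
assert (hD : 0 < INR d) by (apply lt_0_INR; lia).
set (x0 := INR d + t).
set (Bd := / sqrt (2 * PI * Zd d t) * exp (- Zd d t / 2)).
set (f := chi2_density d).
set (E := fun y => exists b, x0 <= b /\ y = RInt f x0 b).
assert (hbE : bound E).
{ exists Bd. intros y [b [hb ->]]. apply tail_bound; [exact hd|exact ht|exact hb]. }
assert (hne : exists y, E y) by (exists (RInt f x0 x0); exists x0; split; [lra|reflexivity]).
destruct (completeness E hbE hne) as [p [hub hlub]].
exists p. split.
- split.
  + intros b hb. constructor. apply ex_RInt_Reals_0. apply chi2_ex; [exact hd|unfold x0; lra|exact hb].
  + intros eps heps.
    destruct (classic (exists b, x0 <= b /\ p - eps < RInt f x0 b)) as [[b0 [hb0 hlt]]|hno].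
    * exists b0. intros b hb pr. rewrite <- RInt_Reals.
      assert (hup : RInt f x0 b <= p) by (apply hub; exists b; split; [lra|reflexivity]).
      assert (hmono : RInt f x0 b0 <= RInt f x0 b).
      { rewrite <- (RInt_Chasles f x0 b0 b).
        - assert (0 <= RInt f b0 b).
          { apply RInt_ge_0; [lra| apply chi2_ex; [exact hd|unfold x0 in *; lra|lra] |].
            intros; apply chi2_ge0; exact hd. }
          unfold plus; simpl. lra.
        - apply chi2_ex; [exact hd|unfold x0; lra|lra].
        - apply chi2_ex; [exact hd|unfold x0 in *; lra|lra]. }
      fold f. apply Rabs_def1; lra.
    * exfalso.
      assert (p <= p - eps).
      { apply hlub. intros y [b [hb ->]].
        destruct (Rle_lt_dec (RInt f x0 b) (p - eps)) as [|hl]; [assumption|].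
        exfalso. apply hno. exists b. split; assumption. }
      lra.
- apply hlub. intros y [b [hb ->]]. apply tail_bound; [exact hd|exact ht|exact hb].
Qed.
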